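(* For all integers $n\ge 0$ and $k\ge 1$, $$(k+1)(n+1-k)\,b_n^{(k-1)}=\left(k(k+1)-n-1\right)b_n^{(k)}+k(n+k+2)\,b_n^{(k+1)}.$$
   Context: Let $X(\theta)=1+2\cos\theta$ and, for $k\ge 0$, $\chi_k(\theta)=1+2\sum_{j=1}^{k}\cos(j\theta)$ (the character of the $(k+1)$-dimensional irreducible representation of the Lie algebra $A_1$). For $n\ge 0$ the integers $b_n^{(k)}$, $0\le k\le n$, are the unique coefficients with $X(\theta)^n=\sum_{k=0}^{n}b_n^{(k)}\chi_k(\theta)$ for all real $\theta$; set $b_n^{(k)}=0$ for $k>n$. *)

(* Defs.v *)
From Stdlib Require Import Reals ZArith.
Open Scope R_scope.

Definition Xf (t : R) : R := 1 + 2 * cos t.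

Fixpoint csum (k : nat) (t : R) : R :=
  match k with
  | O => 0
  | S k' => csum k' t + cos (INR (S k') * t)
  end.

Definition chi (k : nat) (t : R) : R := 1 + 2 * csum k t.

Definition is_b (b : nat -> nat -> Z) : Prop :=
  (forall (n : nat) (t : R),
      (Xf t) ^ n = sum_f_R0 (fun k => IZR (b n k) * chi k t) n) /\
  (forall n k : nat, (n < k)%nat -> b n k = 0%Z).

(* Main.v *)
Require Import Defs.
From Stdlib Require Import Reals ZArith Lra Lia.

Module Aux.
Open Scope R_scope.

Definition S_ (A : nat -> R) (n : nat) (t : R) := sum_f_R0 (fun j => A j * cos (INR j * t)) n.

Lemma sum_zero (f : nat -> R) n : (forall j, (j <= n)%nat -> f j = 0) -> sum_f_R0 f n = 0.
Proof.
  induction n; intros H; simpl.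
  - apply H; lia.
  - rewrite IHn by (intros; apply H; lia). rewrite H by lia. ring.
Qed.

Lemma shift_id (A : nat -> R) h c t m :
  2 * S_ (fun j => A j * (cos (INR j * h) - c)) m t =
  S_ A m (t + h) + S_ A m (t - h) - 2 * c * S_ A m t.
Proof.
  unfold S_; induction m; cbn [sum_f_R0].
  - rewrite Rmult_0_l, !Rmult_0_l, !cos_0. ring.
  - rewrite Rmult_plus_distr_l, IHm.
    replace (INR (S m) * (t + h)) with (INR (S m) * t + INR (S m) * h) by ring.
    replace (INR (S m) * (t - h)) with (INR (S m) * t - INR (S m) * h) by ring.
    rewrite cos_plus, cos_minus. ring.
Qed.

Lemma cos_gt_m1 x : 0 <= x < PI -> -1 < cos x.
Proof.
  intros [H1 H2]. rewrite <- cos_PI. pose proof PI_RGT_0; apply cos_decreasing_1; lra.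
Qed.

Lemma cos_uniq n : forall A, (forall t, S_ A n t = 0) -> forall j, (j <= n)%nat -> A j = 0.
Proof.
  induction n; intros A HA j Hj.
  - assert (j = 0%nat) by lia; subst.
    specialize (HA 0). unfold S_ in HA; simpl in HA. rewrite Rmult_0_l, cos_0 in HA. lra.
  - assert (Hlow : forall j, (j <= n)%nat -> A j = 0).
    { intros i Hi.
      set (h := PI / INR (S n)).
      assert (HS : forall t, S_ (fun j => A j * (cos (INR j * h) - cos (INR (S n) * h))) n t = 0).
      { intros t.
        assert (E := shift_id A h (cos (INR (S n) * h)) t (S n)).
        rewrite !HA in E.
        unfold S_ in E; cbn [sum_f_R0] in E. unfold S_.
        rewrite Rminus_diag, Rmult_0_r, Rmult_0_l, Rplus_0_r in E. lra. }
      specialize (IHn _ HS i Hi). cbv beta in IHn.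
      assert (Hpos : 0 < INR (S n)) by (apply lt_0_INR; lia).
      assert (Eh : INR (S n) * h = PI) by (unfold h; field; lra).
      rewrite Eh, cos_PI in IHn.
      assert (-1 < cos (INR i * h)).
      { apply cos_gt_m1. pose proof PI_RGT_0.
        assert (INR i <= INR n) by (apply le_INR; lia).
        assert (0 <= INR i) by apply pos_INR.
        rewrite S_INR in Hpos, Eh. unfold h in *. rewrite S_INR.
        split.
        - apply Rmult_le_pos; [lra| apply Rlt_le, Rdiv_lt_0_compat; lra].
        - apply Rmult_lt_reg_r with (INR n + 1); [lra|].
          replace (INR i * (PI / (INR n + 1)) * (INR n + 1)) with (PI * INR i) by (field; lra).
          nra. }
      destruct (Rmult_integral _ _ IHn); [assumption| lra]. }
    destruct (Nat.le_gt_cases j n) as [Hjn|Hjn]; [apply Hlow; auto|].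
    assert (j = S n) by lia; subst.
    specialize (HA 0). unfold S_ in HA; cbn [sum_f_R0] in HA.
    rewrite sum_zero in HA by (intros; rewrite Hlow by lia; ring).
    rewrite Rmult_0_r, cos_0 in HA. lra.
Qed.

Definition cospoly (n : nat) (f : R -> R) := exists A, forall t, f t = S_ A n t.

Lemma cospoly_ext n f g : cospoly n f -> (forall t, g t = f t) -> cospoly n g.
Proof. intros [A HA] H. exists A. intros t. rewrite H; auto. Qed.

Lemma cospoly_add n f g : cospoly n f -> cospoly n g -> cospoly n (fun t => f t + g t).
Proof.
  intros [A HA] [B HB]. exists (fun j => A j + B j). intros t. rewrite HA, HB.
  unfold S_. rewrite <- plus_sum. apply sum_eq. intros; ring.
Qed.

Lemma cospoly_scal n f c : cospoly n f -> cospoly n (fun t => c * f t).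
Proof.
  intros [A HA]. exists (fun j => c * A j). intros t. rewrite HA.
  unfold S_. rewrite scal_sum. apply sum_eq. intros; ring.
Qed.

Lemma cospoly_next n f c : cospoly n f -> cospoly (S n) (fun t => f t + c * cos (INR (S n) * t)).
Proof.
  intros [A HA]. exists (fun j => if Nat.leb j n then A j else c). intros t. rewrite HA.
  unfold S_. cbn [sum_f_R0]. replace (S n <=? n) with false by (symmetry; apply Nat.leb_gt; lia). f_equal.
  apply sum_eq. intros i Hi. rewrite (proj2 (Nat.leb_le i n) Hi). reflexivity.
Qed.

Lemma cospoly_mono n f : cospoly n f -> cospoly (S n) f.
Proof.
  intros H. apply cospoly_ext with (f := fun t => f t + 0 * cos (INR (S n) * t)).
  - apply cospoly_next; auto.
  - intros; ring.
Qed.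

Lemma cospoly_mono_le n m f : (n <= m)%nat -> cospoly n f -> cospoly m f.
Proof. induction 1; auto. intros; apply cospoly_mono; auto. Qed.

Lemma chi_S k t : chi (S k) t = chi k t + 2 * cos (INR (S k) * t).
Proof. unfold chi. cbn [csum]. ring. Qed.

Lemma cospoly_chi k : cospoly k (chi k).
Proof.
  induction k.
  - exists (fun _ => 1). intros t. unfold S_, chi; simpl. rewrite Rmult_0_l, cos_0. ring.
  - apply cospoly_ext with (f := fun t => chi k t + 2 * cos (INR (S k) * t)).
    + apply cospoly_next; auto.
    + intros; apply chi_S.
Qed.

Lemma cospoly_chisum n a : cospoly n (fun t => sum_f_R0 (fun k => a k * chi k t) n).
Proof.
  induction n.
  - simpl. apply cospoly_scal with (f := chi 0). apply cospoly_chi.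
  - cbn [sum_f_R0]. apply cospoly_add.
    + apply cospoly_mono; auto.
    + apply cospoly_scal with (f := chi (S n)). apply cospoly_chi.
Qed.

Lemma top_zero n f c : cospoly n f -> (forall t, f t + c * cos (INR (S n) * t) = 0) ->
  c = 0 /\ forall t, f t = 0.
Proof.
  intros Hf H. destruct (cospoly_next n f c Hf) as [A HA].
  destruct Hf as [B HB].
  assert (HZ : forall j, (j <= S n)%nat -> A j = 0).
  { apply cos_uniq. intros t. rewrite <- HA. apply H. }
  assert (Hc : c = 0).
  {
    assert (E : forall t, c * cos (INR (S n) * t) = - f t) by (intros t; specialize (H t); lra).
    assert (forall t, S_ A (S n) t = 0) by (intros; unfold S_; apply sum_zero; intros; rewrite HZ by lia; ring).
    set (D := fun j => if Nat.leb j n then B j else c).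
    assert (HD : forall t, S_ D (S n) t = 0).
    { intros t. unfold S_, D. cbn [sum_f_R0]. replace (S n <=? n) with false by (symmetry; apply Nat.leb_gt; lia).
      rewrite <- (H t), HB. unfold S_. f_equal. apply sum_eq. intros i Hi.
      rewrite (proj2 (Nat.leb_le i n) Hi). reflexivity. }
    pose proof (cos_uniq _ D HD (S n) (le_n _)) as HH. unfold D in HH.
    replace (S n <=? n) with false in HH by (symmetry; apply Nat.leb_gt; lia). exact HH. }
  split; auto. intros t. specialize (H t). rewrite Hc in H. lra.
Qed.

Lemma chi_uniq n : forall a, (forall t, sum_f_R0 (fun k => a k * chi k t) n = 0) ->
  forall k, (k <= n)%nat -> a k = 0.
Proof.
  induction n; intros a Ha k Hk.
  - assert (k = 0%nat) by lia; subst. specialize (Ha 0). simpl in Ha.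
    unfold chi in Ha; simpl in Ha. lra.
  - assert (Htop : a (S n) = 0 /\ forall t,
       sum_f_R0 (fun k => a k * chi k t) n + a (S n) * chi n t = 0).
    { assert (Hc := top_zero n (fun t => sum_f_R0 (fun k => a k * chi k t) n + a (S n) * chi n t)
                 (2 * a (S n))).
      destruct Hc as [H1 H2].
      - apply cospoly_add. apply cospoly_chisum. apply cospoly_scal, cospoly_chi.
      - intros t. rewrite <- (Ha t). cbn [sum_f_R0]. rewrite chi_S. ring.
      - split; [lra|]. exact H2. }
    destruct Htop as [H1 H2].
    destruct (Nat.le_gt_cases k n) as [Hkn|Hkn].
    + apply (IHn a); auto. intros t. specialize (H2 t). rewrite H1 in H2. lra.
    + assert (k = S n) by lia; subst; auto.
Qed.

Lemma cos2 a b : 2 * cos a * cos b = cos (b + a) + cos (b - a).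
Proof. rewrite cos_plus, cos_minus. ring. Qed.

Lemma X_chi0 t : Xf t * chi 0 t = chi 1 t.
Proof. unfold Xf, chi; simpl. rewrite Rmult_1_l. ring. Qed.

Lemma twocos_chi k t : 2 * cos t * chi (S k) t = chi (S (S k)) t + chi k t.
Proof.
  induction k.
  - rewrite !chi_S. unfold chi; simpl csum.
    replace (INR 2 * t) with (t + t) by (simpl; ring).
    replace (INR 1 * t) with t by (simpl; ring). rewrite cos_plus.
    pose proof (sin2_cos2 t). unfold Rsqr in H. nra.
  - rewrite (chi_S (S k) t) at 1. rewrite Rmult_plus_distr_l, IHk.
    replace (2 * cos t * (2 * cos (INR (S (S k)) * t))) with (2 * (2 * cos t * cos (INR (S (S k)) * t))) by ring.
    rewrite cos2.
    replace (INR (S (S k)) * t + t) with (INR (S (S (S k))) * t) by (rewrite (S_INR (S (S k))); ring).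
    replace (INR (S (S k)) * t - t) with (INR (S k) * t) by (rewrite (S_INR (S k)); ring).
    rewrite (chi_S (S (S k)) t), (chi_S k t). ring.
Qed.

Lemma X_chiS k t : Xf t * chi (S k) t = chi (S (S k)) t + chi (S k) t + chi k t.
Proof. unfold Xf at 1. rewrite Rmult_plus_distr_r, twocos_chi. ring. Qed.

Definition cf (a : nat -> R) (k : nat) : R :=
  match k with O => a 1%nat | S j => a j + a (S j) + a (S (S j)) end.

Lemma mult_sum a t m :
  Xf t * sum_f_R0 (fun k => a k * chi k t) m =
  sum_f_R0 (fun k => cf a k * chi k t) (S m)
  - a (S m) * (chi m t + chi (S m) t) - a (S (S m)) * chi (S m) t.
Proof.
  induction m.
  - cbn [sum_f_R0]. unfold cf.
    replace (Xf t * (a 0%nat * chi 0 t)) with (a 0%nat * (Xf t * chi 0 t)) by ring.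
    rewrite X_chi0. ring.
  - cbn [sum_f_R0] in *. rewrite Rmult_plus_distr_l, IHm.
    replace (Xf t * (a (S m) * chi (S m) t)) with (a (S m) * (Xf t * chi (S m) t)) by ring.
    rewrite X_chiS. unfold cf. ring.
Qed.

Lemma rec (b : nat -> nat -> Z) (Hb : is_b b) n k :
  IZR (b (S n) k) = cf (fun j => IZR (b n j)) k.
Proof.
  destruct Hb as [H1 H2].
  set (a := fun j => IZR (b n j)).
  assert (Hz : forall j, (n < j)%nat -> a j = 0) by (intros; unfold a; rewrite H2; auto).
  destruct (Nat.le_gt_cases k (S n)) as [Hk|Hk].
  - cut (IZR (b (S n) k) - cf a k = 0); [lra|].
    apply (chi_uniq (S n) (fun k => IZR (b (S n) k) - cf a k)); auto.
    intros t.
    rewrite (sum_eq _ (fun k => IZR (b (S n) k) * chi k t - cf a k * chi k t))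
      by (intros; ring).
    rewrite minus_sum, <- H1. simpl pow. rewrite H1, mult_sum.
    rewrite !H2 by lia. unfold a. ring.
  - rewrite H2 by lia. destruct k as [|j]; [lia|]. unfold cf.
    rewrite !Hz by lia. ring.
Qed.

Lemma recZ0 b (Hb : is_b b) n : b (S n) 0%nat = b n 1%nat.
Proof. apply eq_IZR. rewrite rec; auto. Qed.

Lemma recZS b (Hb : is_b b) n j :
  b (S n) (S j) = (b n j + b n (S j) + b n (S (S j)))%Z.
Proof. apply eq_IZR. rewrite rec by auto. simpl. rewrite !plus_IZR. reflexivity. Qed.

Local Open Scope Z_scope.
Definition Iz (N K x y z : Z) := (K+1)*(N+1-K)*x - (K*(K+1)-N-1)*y - K*(N+K+2)*z.

Lemma id1 N x0 x1 x2 x3 :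
  2 * Iz (N+1) 1 x1 (x0+x1+x2) (x1+x2+x3) = Iz N 1 x0 x1 x2 + Iz N 2 x1 x2 x3.
Proof. unfold Iz; ring. Qed.

Lemma id2 N K x0 x1 x2 x3 x4 :
  K*(K+1) * Iz (N+1) K (x0+x1+x2) (x1+x2+x3) (x2+x3+x4) =
  (K+1)*(K+1) * Iz N (K-1) x0 x1 x2 + (K*K+K-1) * Iz N K x1 x2 x3 + K*K * Iz N (K+1) x2 x3 x4.
Proof. unfold Iz; ring. Qed.

Definition P b n := forall k, (1 <= k)%nat ->
  Iz (Z.of_nat n) (Z.of_nat k) (b n (k-1)%nat) (b n k) (b n (k+1)%nat) = 0.

Lemma allP b (Hb : is_b b) n : P b n.
Proof.
  pose proof (proj2 Hb) as H2.
  induction n; intros k Hk.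
  - destruct k as [|[|k]]; [lia| |].
    + simpl. rewrite (H2 0 1)%nat, (H2 0 2)%nat by lia. unfold Iz. ring.
    + replace (S (S k) - 1)%nat with (S k) by lia.
      rewrite !H2 by lia. unfold Iz. ring.
  - rewrite Nat2Z.inj_succ. unfold Z.succ.
    destruct k as [|[|k]]; [lia| |].
    + simpl (1 - 1)%nat. simpl (1+1)%nat.
      rewrite recZ0, !recZS by auto.
      assert (E := id1 (Z.of_nat n) (b n 0%nat) (b n 1%nat) (b n 2%nat) (b n 3%nat)).
      pose proof (IHn 1%nat ltac:(lia)) as A1. pose proof (IHn 2%nat ltac:(lia)) as A2.
      simpl in A1, A2. rewrite A1, A2 in E. simpl Z.of_nat. lia.
    + replace (S (S k) - 1)%nat with (S k) by lia.
      replace (S (S k) + 1)%nat with (S (S (S k))) by lia.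
      rewrite !recZS by auto.
      set (K := Z.of_nat (S (S k))).
      assert (E := id2 (Z.of_nat n) K (b n k) (b n (S k)) (b n (S (S k))) (b n (S (S (S k)))) (b n (S (S (S (S k)))))).
      pose proof (IHn (S k) ltac:(lia)) as A1. pose proof (IHn (S (S k)) ltac:(lia)) as A2.
      pose proof (IHn (S (S (S k))) ltac:(lia)) as A3.
      replace (S k - 1)%nat with k in A1 by lia.
      replace (S k + 1)%nat with (S (S k)) in A1 by lia.
      replace (S (S k) - 1)%nat with (S k) in A2 by lia.
      replace (S (S k) + 1)%nat with (S (S (S k))) in A2 by lia.
      replace (S (S (S k)) - 1)%nat with (S (S k)) in A3 by lia.
      replace (S (S (S k)) + 1)%nat with (S (S (S (S k)))) in A3 by lia.
      replace (Z.of_nat (S k)) with (K - 1) in A1 by (unfold K; lia).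
      replace (Z.of_nat (S (S (S k)))) with (K + 1) in A3 by (unfold K; lia).
      fold K in A2.
      rewrite A1, A2, A3 in E.
      assert (HK : 0 < K*(K+1)) by (unfold K; nia).
      assert (E' : K*(K+1) * Iz (Z.of_nat n + 1) K (b n k + b n (S k) + b n (S (S k)))
        (b n (S k) + b n (S (S k)) + b n (S (S (S k))))
        (b n (S (S k)) + b n (S (S (S k))) + b n (S (S (S (S k))))) = 0) by (rewrite E; ring).
      apply Z.mul_eq_0 in E'. destruct E'; [lia|assumption].
Qed.
End Aux.

Theorem theorem5 (b : nat -> nat -> Z) (Hb : is_b b) (n k : nat) (hk : (1 <= k)%nat) :
  ((Z.of_nat k + 1) * (Z.of_nat n + 1 - Z.of_nat k) * b n (k - 1)%nat
   = (Z.of_nat k * (Z.of_nat k + 1) - Z.of_nat n - 1) * b n k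
     + Z.of_nat k * (Z.of_nat n + Z.of_nat k + 2) * b n (k + 1)%nat)%Z.
Proof.
  pose proof (Aux.allP b Hb n k hk) as H. unfold Aux.Iz in H.
  apply Z.sub_move_0_r. rewrite <- H. ring.
Qed.
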